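(* Let $W,Q$ be symmetric BIDMCs, $p\in(0,1)$ and $\varepsilon\in[0,1]$. If $p\,\mathrm B(\varepsilon)+(1-p)W\preccurlyeq p\,\mathrm B(\varepsilon)+(1-p)Q$, then $W\preccurlyeq Q$.
   Context: A binary-input discrete memoryless channel (BIDMC) $W$ has input $x$ uniformly distributed on $\{0,1\}$, a discrete output alphabet and transition probabilities $\Pr(y\mid x)$. Its LR-profile is $P_W(\varepsilon)=\Pr\big(\mathcal L_W(y)=\varepsilon/(1-\varepsilon)\big)$, where $\mathcal L_W(\hat y)=\Pr(y=\hat y\mid x=0)/\Pr(y=\hat y\mid x=1)$; $W\cong W'$ if their LR-profiles coincide. $W'\preccurlyeq W$ ($W'$ is a degradation of $W$) if there is a channel $R$ from the output alphabet $\mathcal Y$ of $W$ to that of $W'$ with $\Pr(y'\mid x'=a)=\sum_{y\in\mathcal Y}\Pr(y\mid x=a)R(y'\mid y)$, $a\in\{0,1\}$. $\mathrm B(\varepsilon)$ is the binary symmetric channel with crossover probability $\varepsilon$. For BIDMCs $W_1,W_2$ and $p\in[0,1]$, $pW_1+(1-p)W_2$ is the random switching channel that, with probability $p$ (resp. $1-p$), independently of the input, sends the input through $W_1$ (resp. $W_2$) and outputs the channel output together with the index of the channel used. A BIDMC is symmetric if $P_W(\varepsilon)=P_W(1-\varepsilon)$ for all $\varepsilon\in[0,1]$. *)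

(* Defs.v *)
From HB Require Import structures.
From mathcomp Require Import all_boot all_order all_algebra.
From mathcomp Require Import reals.
Set Implicit Arguments. Unset Strict Implicit. Unset Printing Implicit Defensive.
Import Order.TTheory GRing.Theory Num.Theory.
Local Open Scope ring_scope.

(* A binary-input channel with finite output alphabet Y:
   W a y = Pr(y | x = a), input a : bool (false = 0, true = 1). *)
Definition chan (R : realType) (Y : finType) := bool -> Y -> R.

Definition is_bidmc (R : realType) (Y : finType) (W : chan R Y) : Prop :=
  (forall a y, 0 <= W a y) /\ (forall a, \sum_(y : Y) W a y = 1).

Definition is_stoch (R : realType) (Y Y' : finType) (K : Y -> Y' -> R) : Prop :=
  (forall y y', 0 <= K y y') /\ (forall y, \sum_(y' : Y') K y y' = 1).

(* degraded W' W  :=  W' ≼ W  (W' is a degradation of W). *)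
Definition degraded (R : realType) (Y' Y : finType) (W' : chan R Y') (W : chan R Y)
  : Prop :=
  exists K : Y -> Y' -> R, is_stoch K /\
    forall (a : bool) (y' : Y'), W' a y' = \sum_(y : Y) W a y * K y y'.

(* LR-profile: P_W(eps) = Pr(L_W(y) = eps/(1-eps)) with x uniform,
   i.e. the total output probability (W 0 y + W 1 y)/2 of the outputs y of
   positive probability whose likelihood ratio W 0 y / W 1 y (possibly +oo)
   equals eps/(1-eps), i.e. W 0 y / (W 0 y + W 1 y) = eps. *)
Definition lr_profile (R : realType) (Y : finType) (W : chan R Y) (eps : R) : R :=
  \sum_(y : Y | (W false y + W true y != 0) &&
                (W false y / (W false y + W true y) == eps))
     (W false y + W true y) / 2.

Definition symmetric_chan (R : realType) (Y : finType) (W : chan R Y) : Prop :=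
  forall eps : R, 0 <= eps <= 1 -> lr_profile W eps = lr_profile W (1 - eps).

Definition bsc (R : realType) (eps : R) : chan R bool :=
  fun a b => if a == b then 1 - eps else eps.

(* Random switching channel p W1 + (1-p) W2: output is the channel index
   (inl = W1, inr = W2) together with that channel's output. *)
Definition switch_chan (R : realType) (Y1 Y2 : finType) (p : R)
  (W1 : chan R Y1) (W2 : chan R Y2) : chan R (Y1 + Y2)%type :=
  fun a z => match z with
             | inl y => p * W1 a y
             | inr y => (1 - p) * W2 a y
             end.

(* Main.v *)
Require Import Defs.
From HB Require Import structures.
From mathcomp Require Import all_boot all_order all_algebra.
From mathcomp Require Import reals.
From mathcomp Require Import ring lra.
Import Order.TTheory GRing.Theory Num.Theory.
Local Open Scope ring_scope.

Section Reduce.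
Variables (R : realType) (V Y Z I : finType) (y0 : Y).
Variables (al : I -> V -> R) (be : I -> Z -> R) (ga : I -> Y -> R).
Hypotheses (al0 : forall a v, 0 <= al a v) (be0 : forall a z, 0 <= be a z).

Lemma sum_lin (T : finType) (P : pred T) (f g h : T -> R) k :
  \sum_(i | P i) f i * (g i + h i * k) =
  \sum_(i | P i) f i * g i + (\sum_(i | P i) f i * h i) * k.
Proof.
rewrite big_distrl -big_split /=; apply: eq_bigr => i _.
by rewrite mulrDr mulrA.
Qed.

Lemma sum_lin2 (T : finType) (P : pred T) (g h : T -> R) x k :
  \sum_(i | P i) (g i + x * (h i * k)) =
  \sum_(i | P i) g i + x * (\sum_(i | P i) h i) * k.
Proof. by rewrite big_split /= -mulrA big_distrl /= mulr_sumr. Qed.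

Lemma sum_delta : \sum_(y : Y) (if y == y0 then 1 else 0 : R) = 1.
Proof.
rewrite (bigD1 y0) //= eqxx big1 ?addr0 // => y /negbTE -> //.
Qed.

Lemma reduce n : forall (S : {set V}) (A : V -> V -> R) (B : V -> Y -> R)
  (C : Z -> V -> R) (D : Z -> Y -> R),
  #|S| = n ->
  (forall u w, 0 <= A u w) -> (forall u y, 0 <= B u y) ->
  (forall z w, 0 <= C z w) -> (forall z y, 0 <= D z y) ->
  (forall u, u \in S -> \sum_(w in S) A u w + \sum_y B u y = 1) ->
  (forall z, \sum_(w in S) C z w + \sum_y D z y = 1) ->
  (forall a w, w \in S ->
     al a w = \sum_(u in S) al a u * A u w + \sum_z be a z * C z w) ->
  (forall a y, ga a y = \sum_(u in S) al a u * B u y + \sum_z be a z * D z y) ->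
  exists L : Z -> Y -> R, is_stoch L /\
    forall a y, ga a y = \sum_z be a z * L z y.
Proof.
elim: n => [|n IH] S A B C D cS A0 B0 C0 D0 rA rC eA eB.
  have HS := cards0_eq cS; subst S.
  exists D; split; [split=> // z|].
    by have := rC z; rewrite big_set0 add0r.
  by move=> a y; rewrite eB big_set0 add0r.
have : (0 < #|S|)%N by rewrite cS.
case/card_gt0P => v vS.
have cS' : #|S :\ v| = n by move: cS; rewrite (cardsD1 v) vS add1n => -[].
have inS' : forall u, u \in S :\ v -> u \in S.
  by move=> u; rewrite in_setD1 => /andP[].
have rAv := rA v vS; rewrite (big_setD1 v vS) /= in rAv.
have Av1 : A v v <= 1.
  rewrite -rAv -addrA lerDl addr_ge0 // sumr_ge0 //.
case: (ltrP (A v v) 1) => [Avlt|Avge].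
  set c := (1 - A v v)^-1.
  have nz : 1 - A v v != 0 by rewrite subr_eq0 gt_eqF.
  have c0 : 0 <= c by rewrite invr_ge0 subr_ge0.
  have hc : (1 - A v v) * c = 1 by rewrite mulfV.
  have eAv a : al a v = (\sum_(u in S :\ v) al a u * A u v
                          + \sum_z be a z * C z v) * c.
    have h := eA a v vS; rewrite (big_setD1 v vS) /= in h.
    rewrite -[LHS]mulr1 -hc mulrA; congr (_ * c).
    rewrite mulrBr mulr1 {1}h; ring.
  have HH := (IH (S :\ v) (fun u w => A u w + A u v * (A v w * c))
     (fun u y => B u y + A u v * (B v y * c))
     (fun z w => C z w + C z v * (A v w * c))
     (fun z y => D z y + C z v * (B v y * c)) cS').
  apply: HH.
  - by move=> u w; rewrite addr_ge0 // !mulr_ge0.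
  - by move=> u w; rewrite addr_ge0 // !mulr_ge0.
  - by move=> u w; rewrite addr_ge0 // !mulr_ge0.
  - by move=> u w; rewrite addr_ge0 // !mulr_ge0.
  - move=> u uS'; rewrite !sum_lin2.
    have := rA u (inS' u uS'); rewrite (big_setD1 v vS) /= => ru.
    have t : \sum_(w in S :\ v) A v w + \sum_y B v y = 1 - A v v by lra.
    have -> : \sum_(w in S :\ v) A u w + A u v * (\sum_(w in S :\ v) A v w) * c +
      (\sum_y B u y + A u v * (\sum_y B v y) * c) =
      \sum_(w in S :\ v) A u w + \sum_y B u y +
      A u v * ((\sum_(w in S :\ v) A v w + \sum_y B v y) * c) by ring.
    rewrite t hc mulr1; lra.
  - move=> z; rewrite !sum_lin2.
    have := rC z; rewrite (big_setD1 v vS) /= => ru.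
    have t : \sum_(w in S :\ v) A v w + \sum_y B v y = 1 - A v v by lra.
    have -> : \sum_(w in S :\ v) C z w + C z v * (\sum_(w in S :\ v) A v w) * c +
      (\sum_y D z y + C z v * (\sum_y B v y) * c) =
      \sum_(w in S :\ v) C z w + \sum_y D z y +
      C z v * ((\sum_(w in S :\ v) A v w + \sum_y B v y) * c) by ring.
    rewrite t hc mulr1; lra.
  - move=> a w wS'; rewrite !sum_lin.
    have h := eA a w (inS' w wS'); rewrite (big_setD1 v vS) /= in h.
    rewrite h eAv; ring.
  - move=> a y; rewrite !sum_lin.
    rewrite eB (big_setD1 v vS) /= eAv; ring.
have Av1' : A v v = 1 by apply/eqP; rewrite eq_le Av1 Avge.
have z1 : \sum_(w in S :\ v) A v w + \sum_y B v y = 0 by lra.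
have sA0 : 0 <= \sum_(w in S :\ v) A v w by rewrite sumr_ge0.
have sB0 : 0 <= \sum_y B v y by rewrite sumr_ge0.
move: z1; move/eqP; rewrite paddr_eq0 // => /andP[/eqP zA /eqP zB].
have hAvw : forall w, w \in S :\ v -> A v w = 0.
  by move=> w wS; apply: (psumr_eq0P _ zA) => // i _.
have hBv : forall y, B v y = 0.
  by move=> y; apply: (psumr_eq0P _ zB) => // i _.
have hab a : \sum_(u in S :\ v) al a u * A u v = 0 /\
             \sum_z be a z * C z v = 0.
  have h := eA a v vS; rewrite (big_setD1 v vS) /= Av1' mulr1 in h.
  have s1 : 0 <= \sum_(u in S :\ v) al a u * A u v.
    by rewrite sumr_ge0 // => u _; rewrite mulr_ge0.
  have s2 : 0 <= \sum_z be a z * C z v.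
    by rewrite sumr_ge0 // => u _; rewrite mulr_ge0.
  have : \sum_(u in S :\ v) al a u * A u v + \sum_z be a z * C z v = 0 by lra.
  by move/eqP; rewrite paddr_eq0 // => /andP[/eqP -> /eqP ->].
pose dl (y : Y) : R := if y == y0 then 1 else 0.
have dl0 y : 0 <= dl y by rewrite /dl; case: ifP.
apply: (IH (S :\ v) A (fun u y => B u y + A u v * dl y) C
     (fun z y => D z y + C z v * dl y) cS') => //.
- by move=> u y; rewrite addr_ge0 // mulr_ge0.
- by move=> u y; rewrite addr_ge0 // mulr_ge0.
- move=> u uS'; rewrite big_split /= -mulr_sumr sum_delta mulr1.
  have := rA u (inS' u uS'); rewrite (big_setD1 v vS) /= => ru; lra.
- move=> z; rewrite big_split /= -mulr_sumr sum_delta mulr1.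
  have := rC z; rewrite (big_setD1 v vS) /= => ru; lra.
- move=> a w wS'.
  by rewrite (eA a w (inS' w wS')) (big_setD1 v vS) /= hAvw // mulr0 add0r.
- move=> a y; rewrite !sum_lin (hab a).1 (hab a).2 !mul0r !addr0.
  by rewrite eB (big_setD1 v vS) /= hBv mulr0 add0r.
Qed.

End Reduce.

Theorem lemma2 (R : realType) (Y Z : finType) (W : chan R Y) (Q : chan R Z)
  (p eps : R) :
  is_bidmc W -> is_bidmc Q ->
  symmetric_chan W -> symmetric_chan Q ->
  0 < p < 1 -> 0 <= eps <= 1 ->
  degraded (switch_chan p (bsc eps) W) (switch_chan p (bsc eps) Q) ->
  degraded W Q.
Proof.
move=> [W0 W1] [Q0 Q1] _ _ /andP[p0 p1] /andP[e0 e1] [K [[K0 K1] HK]].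
have [y0 _ | Yempty] := pickP (@predT Y); last first.
  have : (0:R) = 1 by rewrite -(W1 false) big1 // => y _; have := Yempty y.
  by move/eqP; rewrite eq_sym oner_eq0.
have p1' : 1 - p != 0 by rewrite subr_eq0 gt_eqF.
have sT (T : finType) (F : T -> R) : \sum_(w in [set: T]) F w = \sum_w F w.
  by apply: eq_bigl => w; rewrite in_setT.
have : exists L : Z -> Y -> R, is_stoch L /\
    forall a y, (1 - p) * W a y = \sum_z ((1 - p) * Q a z) * L z y.
apply: (@reduce R bool Y Z bool y0
  (fun a v => p * bsc eps a v) (fun a z => (1 - p) * Q a z)
  (fun a y => (1 - p) * W a y) _ _ #|[set: bool]| [set: bool]
  (fun u w => K (inl u) (inl w)) (fun u y => K (inl u) (inr y))
  (fun z w => K (inr z) (inl w)) (fun z y => K (inr z) (inr y)) erefl).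
- move=> a v; apply: mulr_ge0; first exact: ltW.
  rewrite /bsc; case: ifP => _; lra.
- by move=> a z; rewrite mulr_ge0 // subr_ge0 ltW.
- by [].
- by [].
- by [].
- by [].
- by move=> u _; rewrite sT; have := K1 (inl u); rewrite big_sumType.
- by move=> z; rewrite sT; have := K1 (inr z); rewrite big_sumType.
- by move=> a w _; rewrite sT; have := HK a (inl w); rewrite big_sumType.
- by move=> a y; rewrite sT; have := HK a (inr y); rewrite big_sumType.
case=> L [HL HLe].
exists L; split => // a y.
apply: (mulfI p1'); rewrite HLe mulr_sumr; apply: eq_bigr => z _.
by rewrite mulrA.
Qed.
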